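(* Let $E\subset\mathbb{S}^1\times M_{2\times2}(\mathbb{C})$ be a real-analytic complex line subbundle over $\mathbb{S}^1$ such that (1) $E^*=E$, i.e. for each $\lambda\in\mathbb{S}^1$ the fiber $E(\lambda)$ is closed under conjugate transpose, and (2) for every $\lambda\in\mathbb{S}^1$ except possibly finitely many, the fiber $E(\lambda)$ contains a positive definite Hermitian matrix. Then there exists a real-analytic section $X$ of $E$ such that $X(\lambda)$ is Hermitian and positive semidefinite for every $\lambda\in\mathbb{S}^1$ and $\det X\not\equiv0$. *)

(* Defs.v *)
From Stdlib Require Import Reals List.
From Coquelicot Require Import Coquelicot.
Open Scope R_scope.

Definition analytic_at (f : R -> R) (x0 : R) : Prop :=
  exists r : R, 0 < r /\ exists a : nat -> R,
    forall x : R, Rabs (x - x0) < r -> is_pseries a (x - x0) (f x).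

Record Mat2 : Type := mkMat2 { m11 : C; m12 : C; m21 : C; m22 : C }.

Definition Mat2_zero : Mat2 := mkMat2 0%C 0%C 0%C 0%C.

Definition Mat2_scale (c : C) (A : Mat2) : Mat2 :=
  mkMat2 (c * m11 A)%C (c * m12 A)%C (c * m21 A)%C (c * m22 A)%C.

Definition Mat2_adj (A : Mat2) : Mat2 :=
  mkMat2 (Cconj (m11 A)) (Cconj (m21 A)) (Cconj (m12 A)) (Cconj (m22 A)).

Definition Mat2_det (A : Mat2) : C := (m11 A * m22 A - m12 A * m21 A)%C.

Definition hermitian (A : Mat2) : Prop := Mat2_adj A = A.

Definition qform (A : Mat2) (v1 v2 : C) : C :=
  (Cconj v1 * (m11 A * v1 + m12 A * v2) + Cconj v2 * (m21 A * v1 + m22 A * v2))%C.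

Definition pos_def (A : Mat2) : Prop :=
  hermitian A /\ forall v1 v2 : C, (v1 <> 0%C \/ v2 <> 0%C) -> 0 < Re (qform A v1 v2).

Definition pos_semidef (A : Mat2) : Prop :=
  hermitian A /\ forall v1 v2 : C, 0 <= Re (qform A v1 v2).

Definition mat_analytic_at (f : R -> Mat2) (x0 : R) : Prop :=
  analytic_at (fun t => Re (m11 (f t))) x0 /\ analytic_at (fun t => Im (m11 (f t))) x0 /\
  analytic_at (fun t => Re (m12 (f t))) x0 /\ analytic_at (fun t => Im (m12 (f t))) x0 /\
  analytic_at (fun t => Re (m21 (f t))) x0 /\ analytic_at (fun t => Im (m21 (f t))) x0 /\
  analytic_at (fun t => Re (m22 (f t))) x0 /\ analytic_at (fun t => Im (m22 (f t))) x0.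

(** The circle S^1 is parametrized by theta |-> exp(i theta); objects over S^1
    are 2*PI-periodic objects over R.  A subbundle E is given by its fibers
    E theta (a set of matrices). *)
Definition periodic_fibers (E : R -> Mat2 -> Prop) : Prop :=
  forall (theta : R) (A : Mat2), E (theta + 2 * PI) A <-> E theta A.

(** E is a real-analytic complex line subbundle of S^1 x M_2(C): near every
    point it is the complex span of a nowhere-vanishing real-analytic local
    frame s. *)
Definition analytic_line_subbundle (E : R -> Mat2 -> Prop) : Prop :=
  periodic_fibers E /\
  forall theta0 : R, exists r : R, 0 < r /\ exists s : R -> Mat2,
    forall theta : R, Rabs (theta - theta0) < r ->
      mat_analytic_at s theta /\ s theta <> Mat2_zero /\
      (forall A : Mat2, E theta A <-> exists c : C, A = Mat2_scale c (s theta)).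

Definition analytic_section (E : R -> Mat2 -> Prop) (X : R -> Mat2) : Prop :=
  (forall theta : R, X (theta + 2 * PI) = X theta) /\
  (forall theta : R, mat_analytic_at X theta) /\
  (forall theta : R, E theta (X theta)).

(* Main.v *)
Require Import Defs.
From Stdlib Require Import Reals List.
From Coquelicot Require Import Coquelicot.
From Stdlib Require Import Lra Lia Classical ZArith IndefiniteDescription.
Open Scope R_scope.

Lemma sum_abs_bound (u : nat -> R) (N n : nat) :
  (n <= N)%nat -> Rabs (u n) <= sum_f_R0 (fun k => Rabs (u k)) N.
Proof.
  induction N as [|N IH]; intros Hn.
  - assert (n = 0%nat) by lia; subst; simpl; lra.
  - simpl. destruct (Nat.eq_dec n (S N)) as [->|Hne].
    + assert (0 <= sum_f_R0 (fun k => Rabs (u k)) N).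
      { apply cond_pos_sum. intros; apply Rabs_pos. }
      lra.
    + assert (n <= N)%nat by lia. specialize (IH H). pose proof (Rabs_pos (u (S N))). lra.
Qed.

Lemma bounded_of_series (u : nat -> R) l : is_series u l ->
  exists M, forall n, Rabs (u n) <= M.
Proof.
  intros H.
  assert (Hl : is_lim_seq u 0) by (apply ex_series_lim_0; exists l; exact H).
  apply is_lim_seq_spec in Hl. simpl in Hl.
  destruct (Hl (mkposreal 1 Rlt_0_1)) as [N HN]. simpl in HN.
  exists (1 + sum_f_R0 (fun k => Rabs (u k)) N).
  intros n. destruct (Compare_dec.le_lt_dec N n) as [h|h].
  - specialize (HN n h). rewrite Rminus_0_r in HN.
    assert (0 <= sum_f_R0 (fun k => Rabs (u k)) N).
    { apply cond_pos_sum. intros; apply Rabs_pos. }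
    lra.
  - pose proof (sum_abs_bound u N n ltac:(lia)). lra.
Qed.

Lemma rad_of_conv (a : nat -> R) (rho l : R) :
  is_pseries a rho l -> Rbar_le rho (CV_radius a).
Proof.
  intros H. apply is_pseries_R in H.
  destruct (bounded_of_series _ _ H) as [M HM].
  destruct (CV_radius_bounded a) as [Hub _].
  apply Hub. exists M. exact HM.
Qed.

Lemma an_rad (f : R -> R) x0 r a :
  0 < r -> (forall x, Rabs (x - x0) < r -> is_pseries a (x - x0) (f x)) ->
  forall y, Rabs y < r -> Rbar_lt (Rabs y) (CV_radius a).
Proof.
  intros Hr H y Hy.
  set (rho := (Rabs y + r) / 2).
  assert (Hc : is_pseries a rho (f (x0 + rho))).
  { replace rho with ((x0 + rho) - x0) at 1 by ring. apply H.
    replace (x0 + rho - x0) with rho by ring. unfold rho.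
    pose proof (Rabs_pos y). rewrite Rabs_pos_eq; lra. }
  pose proof (rad_of_conv _ _ _ Hc) as Hle.
  destruct (CV_radius a) as [c| |]; simpl in *; try tauto.
  unfold rho in Hle. lra.
Qed.

Lemma an_plus f g x0 : analytic_at f x0 -> analytic_at g x0 ->
  analytic_at (fun t => f t + g t) x0.
Proof.
  intros [r1 [Hr1 [a Ha]]] [r2 [Hr2 [b Hb]]].
  exists (Rmin r1 r2). split. apply Rmin_pos; auto.
  exists (PS_plus a b). intros x Hx.
  pose proof (Rmin_l r1 r2). pose proof (Rmin_r r1 r2).
  apply (is_pseries_plus a b (x - x0) (f x) (g x)).
  apply Ha; lra. apply Hb; lra.
Qed.

Lemma an_opp f x0 : analytic_at f x0 -> analytic_at (fun t => - f t) x0.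
Proof.
  intros [r1 [Hr1 [a Ha]]]. exists r1. split; auto. exists (PS_opp a).
  intros x Hx. apply (is_pseries_opp a (x - x0) (f x)). auto.
Qed.

Lemma an_mult f g x0 : analytic_at f x0 -> analytic_at g x0 ->
  analytic_at (fun t => f t * g t) x0.
Proof.
  intros [r1 [Hr1 [a Ha]]] [r2 [Hr2 [b Hb]]].
  exists (Rmin r1 r2). split. apply Rmin_pos; auto.
  exists (PS_mult a b). intros x Hx.
  pose proof (Rmin_l r1 r2). pose proof (Rmin_r r1 r2).
  apply is_pseries_mult. apply Ha; lra. apply Hb; lra.
  apply (an_rad f x0 r1 a Hr1 Ha). lra.
  apply (an_rad g x0 r2 b Hr2 Hb). lra.
Qed.

Lemma an_ext_loc f g x0 : analytic_at f x0 ->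
  (exists d, 0 < d /\ forall x, Rabs (x - x0) < d -> f x = g x) ->
  analytic_at g x0.
Proof.
  intros [r1 [Hr1 [a Ha]]] [d [Hd Hfg]].
  exists (Rmin r1 d). split. apply Rmin_pos; auto.
  exists a. intros x Hx.
  pose proof (Rmin_l r1 d). pose proof (Rmin_r r1 d).
  rewrite <- Hfg by lra. apply Ha; lra.
Qed.

Lemma an_ext f g x0 : analytic_at f x0 -> (forall x, f x = g x) -> analytic_at g x0.
Proof.
  intros H E. apply (an_ext_loc f g x0 H). exists 1. split. lra. auto.
Qed.

Lemma an_minus f g x0 : analytic_at f x0 -> analytic_at g x0 ->
  analytic_at (fun t => f t - g t) x0.
Proof.
  intros Hf Hg. apply (an_ext (fun t => f t + - g t)).
  apply an_plus; auto. apply an_opp; auto. intros; ring.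
Qed.

Lemma an_cont f x0 : analytic_at f x0 ->
  forall eps, 0 < eps -> exists d, 0 < d /\ forall x, Rabs (x - x0) < d -> Rabs (f x - f x0) < eps.
Proof.
  intros [r [Hr [a Ha]]] eps Heps.
  assert (Hrad : Rbar_lt (Rabs 0) (CV_radius a)).
  { apply (an_rad f x0 r a Hr Ha). rewrite Rabs_R0. auto. }
  pose proof (PSeries_continuity a 0 Hrad) as Hc.
  destruct (Hc eps Heps) as [al [Hal Hal2]].
  exists (Rmin al r). split. apply Rmin_pos; auto.
  intros x Hx. pose proof (Rmin_l al r). pose proof (Rmin_r al r).
  assert (E1 : f x = PSeries a (x - x0)).
  { symmetry. apply is_pseries_unique. apply Ha. lra. }
  assert (E2 : f x0 = PSeries a 0).
  { symmetry. apply is_pseries_unique. replace 0 with (x0 - x0) by ring. apply Ha.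
    replace (x0 - x0) with 0 by ring. rewrite Rabs_R0. auto. }
  rewrite E1, E2.
  destruct (Req_dec x x0) as [->|Hne].
  - replace (x0 - x0) with 0 by ring. rewrite Rminus_diag, Rabs_R0. auto.
  - apply (Hal2 (x - x0)). split.
    + split. exact I. intros Heq. apply Hne. lra.
    + simpl. unfold R_dist. rewrite Rminus_0_r. lra.
Qed.

Lemma an_nonneg f x0 : analytic_at f x0 ->
  (forall d, 0 < d -> exists x, Rabs (x - x0) < d /\ 0 <= f x) -> 0 <= f x0.
Proof.
  intros Ha H. destruct (Rle_or_lt 0 (f x0)) as [h|h]; auto.
  destruct (an_cont f x0 Ha (- f x0)) as [d [Hd Hd2]]. lra.
  destruct (H d Hd) as [x [Hx Hfx]]. specialize (Hd2 x Hx).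
  apply Rabs_def2 in Hd2. lra.
Qed.

Fixpoint bl (a : nat -> R) (n : nat) : nat -> R :=
  match n with
  | O => fun _ => / a 0%nat
  | S m => fun j => if Nat.leb j m then bl a m j
                    else - / a 0%nat * sum_f_R0 (fun k => a (S k) * bl a m (m - k)%nat) m
  end.
Definition binv a n := bl a n n.

Lemma bl_stable a : forall m j, (j <= m)%nat -> bl a m j = binv a j.
Proof.
  induction m as [|m IH]; intros j Hj.
  - assert (j = 0%nat) by lia. subst. reflexivity.
  - simpl. destruct (Nat.leb j m) eqn:E.
    + apply Nat.leb_le in E. auto.
    + apply Nat.leb_gt in E. assert (j = S m) by lia. subst.
      unfold binv. cbn [bl]. rewrite (proj2 (Nat.leb_gt (S m) m)) by lia. reflexivity.
Qed.

Lemma binv_S a m : binv a (S m) = - / a 0%nat * sum_f_R0 (fun k => a (S k) * binv a (m - k)%nat) m.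
Proof.
  unfold binv at 1. cbn [bl]. rewrite (proj2 (Nat.leb_gt (S m) m)) by lia.
  f_equal. apply sum_eq. intros k Hk. rewrite bl_stable by lia. reflexivity.
Qed.

Lemma PS_mult_binv0 a : a 0%nat <> 0 -> PS_mult a (binv a) 0 = 1.
Proof. intros H. unfold PS_mult. simpl. unfold binv. simpl. field. auto. Qed.

Lemma PS_mult_binvS a m : a 0%nat <> 0 -> PS_mult a (binv a) (S m) = 0.
Proof.
  intros H. unfold PS_mult. rewrite decomp_sum by lia. simpl pred.
  replace (S m - 0)%nat with (S m) by lia. rewrite binv_S.
  replace (sum_f_R0 (fun i : nat => a (S i) * binv a (S m - S i)%nat) m)
    with (sum_f_R0 (fun k : nat => a (S k) * binv a (m - k)%nat) m).
  field. auto. apply sum_eq. intros; reflexivity.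
Qed.

Lemma geom_sum t m : t <> 1 ->
  sum_f_R0 (fun k => t ^ (S k)) m = (t - t ^ (S (S m))) / (1 - t).
Proof.
  intros Ht. induction m as [|m IH].
  - simpl. field. intro; apply Ht; lra.
  - rewrite tech5, IH. simpl. field. intro; apply Ht; lra.
Qed.

Lemma geom_bound t m : 0 <= t < 1 ->
  sum_f_R0 (fun k => t ^ (S k)) m <= t / (1 - t).
Proof.
  intros Ht. rewrite geom_sum by lra.
  unfold Rdiv. apply Rmult_le_compat_r.
  apply Rlt_le, Rinv_0_lt_compat; lra.
  pose proof (pow_le t (S (S m)) (proj1 Ht)). lra.
Qed.

Lemma sum_abs_le (u : nat -> R) m : Rabs (sum_f_R0 u m) <= sum_f_R0 (fun k => Rabs (u k)) m.
Proof.
  induction m; simpl. lra.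
  eapply Rle_trans. apply Rabs_triang. lra.
Qed.

Lemma binv_bound a M rho :
  a 0%nat <> 0 -> 0 < M -> 0 < rho -> (forall n, Rabs (a n) * rho ^ n <= M) ->
  forall n, Rabs (binv a n) <= / Rabs (a 0%nat) * ((1 + M / Rabs (a 0%nat)) / rho) ^ n.
Proof.
  intros Hc HM Hrho Ha.
  set (c := a 0%nat) in *.
  assert (Hcp : 0 < Rabs c) by (apply Rabs_pos_lt; auto).
  set (K := M / Rabs c).
  assert (HK : 0 < K) by (unfold K; apply Rdiv_lt_0_compat; auto).
  set (q := (1 + K) / rho).
  assert (Hq : 0 < q) by (unfold q; apply Rdiv_lt_0_compat; lra).
  set (t := / (rho * q)).
  assert (Hrq : rho * q = 1 + K) by (unfold q; field; lra).
  assert (Ht0 : 0 <= t) by (unfold t; rewrite Hrq; apply Rlt_le, Rinv_0_lt_compat; lra).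
  assert (Ht1 : t < 1).
  { unfold t; rewrite Hrq. apply (Rmult_lt_reg_l (1 + K)). lra.
    rewrite Rinv_r by lra. lra. }
  assert (Htt : t / (1 - t) = / K).
  { unfold t. rewrite Hrq. field. lra. }
  assert (Hab : forall k, Rabs (a k) <= M / rho ^ k).
  { intros k. specialize (Ha k). apply (Rmult_le_reg_r (rho ^ k)).
    apply pow_lt; auto. unfold Rdiv. rewrite Rmult_assoc, Rinv_l. lra.
    apply pow_nonzero; lra. }
  assert (Hmain : forall n j, (j <= n)%nat -> Rabs (binv a j) <= / Rabs c * q ^ j).
  { induction n as [|n IH]; intros j Hj.
    - assert (j = 0%nat) by lia. subst. unfold binv. simpl.
      rewrite Rabs_inv. fold c. lra.
    - destruct (Nat.eq_dec j (S n)) as [->|Hne]; [|apply IH; lia].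
      rewrite binv_S. rewrite Rabs_mult, Rabs_Ropp, Rabs_inv. fold c.
      apply Rmult_le_compat_l. apply Rlt_le, Rinv_0_lt_compat; auto.
      eapply Rle_trans. apply sum_abs_le.
      eapply Rle_trans.
      { apply (sum_Rle _ (fun k => M * / Rabs c * q ^ (S n) * t ^ (S k))).
        intros k Hk. rewrite Rabs_mult.
        assert (Hb := IH (n - k)%nat ltac:(lia)).
        eapply Rle_trans. apply Rmult_le_compat. apply Rabs_pos. apply Rabs_pos.
        apply (Hab (S k)). apply Hb.
        assert (Hpow : q ^ S n = q ^ (n - k) * q ^ S k).
        { rewrite <- pow_add. f_equal. lia. }
        rewrite Hpow. unfold t. rewrite pow_inv. rewrite Rpow_mult_distr.
        right. field. repeat split; try apply pow_nonzero; lra. }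
      replace (sum_f_R0 (fun k => M * / Rabs c * q ^ S n * t ^ S k) n) with
        ((M * / Rabs c * q ^ S n) * sum_f_R0 (fun k => t ^ S k) n).
      2:{ rewrite scal_sum. apply sum_eq; intros; ring. }
      apply (Rle_trans _ (t / (1 - t) * (M * / Rabs c * q ^ S n))).
      rewrite Rmult_comm. apply Rmult_le_compat_r. apply Rmult_le_pos. apply Rlt_le. apply Rdiv_lt_0_compat; auto.
      apply pow_le; lra. apply geom_bound; lra.
      rewrite Htt. right. unfold K. field. split; lra. }
  intros n. apply (Hmain n n). lia.
Qed.

Lemma an_inv f x0 : analytic_at f x0 -> f x0 <> 0 -> analytic_at (fun t => / f t) x0.
Proof.
  intros [r [Hr [a Ha]]] Hf0.
  assert (Ha0 : a 0%nat = f x0).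
  { rewrite <- PSeries_0. apply is_pseries_unique. replace 0 with (x0 - x0) by ring.
    apply Ha. replace (x0 - x0) with 0 by ring. rewrite Rabs_R0. auto. }
  set (rho := r / 2).
  assert (Hc : is_pseries a rho (f (x0 + rho))).
  { replace rho with ((x0 + rho) - x0) at 1 by ring. apply Ha.
    replace (x0 + rho - x0) with rho by ring. unfold rho. rewrite Rabs_pos_eq; lra. }
  apply is_pseries_R in Hc.
  destruct (bounded_of_series _ _ Hc) as [M0 HM0].
  set (M := Rmax M0 1).
  assert (HM : 0 < M) by (unfold M; pose proof (Rmax_r M0 1); lra).
  assert (Hbnd : forall n, Rabs (a n) * rho ^ n <= M).
  { intros n. specialize (HM0 n). rewrite Rabs_mult, (Rabs_pos_eq (rho ^ n)) in HM0.
    pose proof (Rmax_l M0 1). unfold M. lra. apply pow_le. unfold rho; lra. }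
  assert (Hc0 : a 0%nat <> 0) by (rewrite Ha0; auto).
  assert (Hrho : 0 < rho) by (unfold rho; lra).
  pose proof (binv_bound a M rho Hc0 HM Hrho Hbnd) as Hb.
  set (q := (1 + M / Rabs (a 0%nat)) / rho) in Hb.
  assert (Hcp : 0 < Rabs (a 0%nat)) by (apply Rabs_pos_lt; auto).
  assert (Hq : 0 < q).
  { unfold q. apply Rdiv_lt_0_compat; auto. pose proof (Rdiv_lt_0_compat M _ HM Hcp). lra. }
  assert (Hrad : Rbar_le (/ q) (CV_radius (binv a))).
  { destruct (CV_radius_bounded (binv a)) as [Hub _]. apply Hub.
    exists (/ Rabs (a 0%nat)). intros n. rewrite Rabs_mult. rewrite (Rabs_pos_eq (_ ^ n)).
    2: apply pow_le; apply Rlt_le, Rinv_0_lt_compat; auto.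
    eapply Rle_trans. apply Rmult_le_compat_r. apply pow_le; apply Rlt_le, Rinv_0_lt_compat; auto.
    apply Hb. rewrite Rmult_assoc, <- Rpow_mult_distr, Rinv_r, pow1 by lra. lra. }
  exists (Rmin r (/ q)). split. apply Rmin_pos; auto. apply Rinv_0_lt_compat; auto.
  exists (binv a). intros x Hx.
  pose proof (Rmin_l r (/ q)). pose proof (Rmin_r r (/ q)).
  assert (Hy1 : Rbar_lt (Rabs (x - x0)) (CV_radius (binv a))).
  { destruct (CV_radius (binv a)); simpl in *; try tauto; lra. }
  assert (Hy2 : Rbar_lt (Rabs (x - x0)) (CV_radius a)).
  { apply (an_rad f x0 r a Hr Ha). lra. }
  pose proof (PSeries_correct _ _ (CV_radius_inside _ _ Hy1)) as HB.
  pose proof (is_pseries_mult _ _ _ _ _ (Ha x ltac:(lra)) HB Hy2 Hy1) as HM2.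
  assert (Hone : is_pseries (PS_mult a (binv a)) (x - x0) 1).
  { apply is_pseries_R. apply is_series_decr_1.
    apply (is_series_ext (fun _ : nat => 0)).
    { intros n. simpl. rewrite PS_mult_binvS by auto. ring. }
    match goal with |- is_series _ ?l => replace l with 0 end.
    2:{ rewrite PS_mult_binv0 by auto. simpl. unfold plus, opp; simpl. ring. }
    pose proof (is_series_scal_r 0 _ _ (is_series_geom (1/2) ltac:(rewrite Rabs_pos_eq; lra))) as Z.
    rewrite Rmult_0_r in Z. apply (is_series_ext _ _ _ (fun n => Rmult_0_r _)) in Z. exact Z. }
  apply is_pseries_unique in HM2. apply is_pseries_unique in Hone.
  rewrite HM2 in Hone.
  assert (Hfx : f x <> 0). { intro h; rewrite h in Hone; lra. }
  replace (/ f x) with (PSeries (binv a) (x - x0)). exact HB.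
  apply (Rmult_eq_reg_l (f x)); auto. rewrite Rinv_r; auto.
Qed.

Definition Nrm (A : Mat2) : R :=
  Re (m11 A) ^ 2 + Im (m11 A) ^ 2 + Re (m12 A) ^ 2 + Im (m12 A) ^ 2 +
  Re (m21 A) ^ 2 + Im (m21 A) ^ 2 + Re (m22 A) ^ 2 + Im (m22 A) ^ 2.

Definition Fm (A : Mat2) : Mat2 :=
  Mat2_scale (RtoC (/ Nrm A) * Cconj (m11 A + m22 A))%C A.

Lemma mat_ext (A B : Mat2) :
  Re (m11 A) = Re (m11 B) -> Im (m11 A) = Im (m11 B) ->
  Re (m12 A) = Re (m12 B) -> Im (m12 A) = Im (m12 B) ->
  Re (m21 A) = Re (m21 B) -> Im (m21 A) = Im (m21 B) ->
  Re (m22 A) = Re (m22 B) -> Im (m22 A) = Im (m22 B) -> A = B.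
Proof.
  destruct A as [[a1 a2] [b1 b2] [c1 c2] [d1 d2]], B as [[a1' a2'] [b1' b2'] [c1' c2'] [d1' d2']].
  simpl. intros; subst. reflexivity.
Qed.

Lemma Nrm_nonneg A : 0 <= Nrm A.
Proof. unfold Nrm. repeat apply Rplus_le_le_0_compat; apply pow2_ge_0. Qed.

Lemma Nrm_pos A : A <> Mat2_zero -> 0 < Nrm A.
Proof.
  intros H. destruct (Rle_lt_dec (Nrm A) 0) as [h|h]; auto.
  exfalso. apply H. unfold Nrm in h.
  pose proof (pow2_ge_0 (Re (m11 A))). pose proof (pow2_ge_0 (Im (m11 A))).
  pose proof (pow2_ge_0 (Re (m12 A))). pose proof (pow2_ge_0 (Im (m12 A))).
  pose proof (pow2_ge_0 (Re (m21 A))). pose proof (pow2_ge_0 (Im (m21 A))).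
  pose proof (pow2_ge_0 (Re (m22 A))). pose proof (pow2_ge_0 (Im (m22 A))).
  apply mat_ext; simpl; nra.
Qed.

Lemma scale_scale (c d : C) A : Mat2_scale c (Mat2_scale d A) = Mat2_scale (c * d)%C A.
Proof. unfold Mat2_scale; simpl. f_equal; ring. Qed.

Lemma scale_one A : Mat2_scale 1%C A = A.
Proof. destruct A; unfold Mat2_scale; simpl. f_equal; ring. Qed.

Lemma scale_nz (c : C) A : c <> 0%C -> A <> Mat2_zero -> Mat2_scale c A <> Mat2_zero.
Proof.
  intros Hc HA Heq. apply HA. destruct A as [a b d e]. unfold Mat2_scale, Mat2_zero in *. simpl in *.
  pose proof (f_equal m11 Heq) as H1. pose proof (f_equal m12 Heq) as H2.
  pose proof (f_equal m21 Heq) as H3. pose proof (f_equal m22 Heq) as H4. simpl in H1, H2, H3, H4.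
  assert (H5 : forall z, (c * z)%C = 0%C -> z = 0%C).
  { intros z Hz. replace z with (/ c * (c * z))%C. rewrite Hz. ring. rewrite Cmult_assoc, Cinv_l; [ring|auto]. }
  rewrite (H5 a), (H5 b), (H5 d), (H5 e); auto.
Qed.

Definition ReT A := Re (m11 A) + Re (m22 A).
Definition ImT A := Im (m11 A) + Im (m22 A).

Lemma Fm11_re A : Re (m11 (Fm A)) = / Nrm A * (ReT A * Re (m11 A) + ImT A * Im (m11 A)).
Proof. unfold Fm, ReT, ImT, Mat2_scale. set (N := Nrm A). simpl. unfold Re, Im. ring. Qed.
Lemma Fm11_im A : Im (m11 (Fm A)) = / Nrm A * (ReT A * Im (m11 A) - ImT A * Re (m11 A)).
Proof. unfold Fm, ReT, ImT, Mat2_scale. set (N := Nrm A). simpl. unfold Re, Im. ring. Qed.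
Lemma Fm12_re A : Re (m12 (Fm A)) = / Nrm A * (ReT A * Re (m12 A) + ImT A * Im (m12 A)).
Proof. unfold Fm, ReT, ImT, Mat2_scale. set (N := Nrm A). simpl. unfold Re, Im. ring. Qed.
Lemma Fm12_im A : Im (m12 (Fm A)) = / Nrm A * (ReT A * Im (m12 A) - ImT A * Re (m12 A)).
Proof. unfold Fm, ReT, ImT, Mat2_scale. set (N := Nrm A). simpl. unfold Re, Im. ring. Qed.
Lemma Fm21_re A : Re (m21 (Fm A)) = / Nrm A * (ReT A * Re (m21 A) + ImT A * Im (m21 A)).
Proof. unfold Fm, ReT, ImT, Mat2_scale. set (N := Nrm A). simpl. unfold Re, Im. ring. Qed.
Lemma Fm21_im A : Im (m21 (Fm A)) = / Nrm A * (ReT A * Im (m21 A) - ImT A * Re (m21 A)).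
Proof. unfold Fm, ReT, ImT, Mat2_scale. set (N := Nrm A). simpl. unfold Re, Im. ring. Qed.
Lemma Fm22_re A : Re (m22 (Fm A)) = / Nrm A * (ReT A * Re (m22 A) + ImT A * Im (m22 A)).
Proof. unfold Fm, ReT, ImT, Mat2_scale. set (N := Nrm A). simpl. unfold Re, Im. ring. Qed.
Lemma Fm22_im A : Im (m22 (Fm A)) = / Nrm A * (ReT A * Im (m22 A) - ImT A * Re (m22 A)).
Proof. unfold Fm, ReT, ImT, Mat2_scale. set (N := Nrm A). simpl. unfold Re, Im. ring. Qed.

Lemma Fm_scale (c : C) A : c <> 0%C -> A <> Mat2_zero -> Fm (Mat2_scale c A) = Fm A.
Proof.
  intros Hc HA. pose proof (Nrm_pos A HA) as HN.
  assert (Hc2 : 0 < Re c ^ 2 + Im c ^ 2).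
  { destruct c as [c1 c2]. simpl.
    destruct (Req_dec c1 0); destruct (Req_dec c2 0); try nra.
    subst. exfalso. apply Hc. reflexivity. }
  assert (EN : Nrm (Mat2_scale c A) = (Re c ^ 2 + Im c ^ 2) * Nrm A).
  { unfold Nrm, Mat2_scale. simpl. unfold Re, Im. ring. }
  apply mat_ext;
  rewrite ?Fm11_re, ?Fm11_im, ?Fm12_re, ?Fm12_im, ?Fm21_re, ?Fm21_im, ?Fm22_re, ?Fm22_im, EN;
  unfold ReT, ImT, Mat2_scale; simpl; unfold Re, Im in *; field; lra.
Qed.

Lemma RtoC_conj r : Cconj (RtoC r) = RtoC r.
Proof. unfold Cconj, RtoC; simpl. f_equal. ring. Qed.

Lemma Fm_herm (c : C) A : Mat2_adj A = Mat2_scale c A -> hermitian (Fm A).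
Proof.
  destruct A as [a b d e]. unfold Mat2_adj, Mat2_scale, hermitian, Fm. cbn [m11 m12 m21 m22].
  intros H.
  pose proof (f_equal m11 H) as H1. pose proof (f_equal m12 H) as H2.
  pose proof (f_equal m21 H) as H3. pose proof (f_equal m22 H) as H4. cbn [m11 m12 m21 m22] in H1, H2, H3, H4.
  set (r := RtoC (/ Nrm (mkMat2 a b d e))).
  unfold Mat2_adj, Mat2_scale. cbn [m11 m12 m21 m22]. unfold r.
  f_equal; rewrite ?Cmult_conj, ?Cplus_conj, ?Cconj_conj, ?RtoC_conj;
  rewrite ?H1, ?H2, ?H3, ?H4; ring.
Qed.

Lemma qform_re A (v1 v2 : C) : Re (qform A v1 v2) =
  Re v1 * (Re (m11 A) * Re v1 - Im (m11 A) * Im v1 + Re (m12 A) * Re v2 - Im (m12 A) * Im v2)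
  + Im v1 * (Re (m11 A) * Im v1 + Im (m11 A) * Re v1 + Re (m12 A) * Im v2 + Im (m12 A) * Re v2)
  + Re v2 * (Re (m21 A) * Re v1 - Im (m21 A) * Im v1 + Re (m22 A) * Re v2 - Im (m22 A) * Im v2)
  + Im v2 * (Re (m21 A) * Im v1 + Im (m21 A) * Re v1 + Re (m22 A) * Im v2 + Im (m22 A) * Re v2).
Proof. destruct A as [[] [] [] []], v1, v2. unfold qform. simpl. ring. Qed.

Lemma herm_comp A : hermitian A ->
  Im (m11 A) = 0 /\ Im (m22 A) = 0 /\ Re (m21 A) = Re (m12 A) /\ Im (m21 A) = - Im (m12 A).
Proof.
  destruct A as [[a1 a2] [b1 b2] [c1 c2] [d1 d2]]. unfold hermitian, Mat2_adj; simpl.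
  intros H. injection H. intros. lra.
Qed.

Lemma det_re A : Re (Mat2_det A) =
  Re (m11 A) * Re (m22 A) - Im (m11 A) * Im (m22 A) - (Re (m12 A) * Re (m21 A) - Im (m12 A) * Im (m21 A)).
Proof. destruct A as [[] [] [] []]. unfold Mat2_det. simpl. ring. Qed.

Lemma psd_crit X : hermitian X -> 0 <= Re (m11 X) -> 0 <= Re (m22 X) ->
  0 <= Re (Mat2_det X) -> pos_semidef X.
Proof.
  intros H Ha Hd Hdet. split; auto. intros v1 v2.
  rewrite det_re in Hdet. rewrite qform_re.
  destruct (herm_comp X H) as [E1 [E2 [E3 E4]]]. rewrite E1, E2, E3, E4 in *.
  set (a := Re (m11 X)) in *. set (d := Re (m22 X)) in *.
  set (p := Re (m12 X)) in *. set (q := Im (m12 X)) in *.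
  set (x1 := Re v1). set (y1 := Im v1). set (x2 := Re v2). set (y2 := Im v2).
  destruct (Rle_lt_dec a 0) as [h|h].
  - assert (a = 0) by lra. subst a. assert (p = 0) by nra. assert (q = 0) by nra.
    rewrite H0, H1, H2 in *. nra.
  - apply (Rmult_le_reg_l a); auto. rewrite Rmult_0_r.
    assert (Eq : a * (x1 * (a * x1 - 0 * y1 + p * x2 - q * y2) + y1 * (a * y1 + 0 * x1 + p * y2 + q * x2) +
       x2 * (p * x1 - - q * y1 + d * x2 - 0 * y2) + y2 * (p * y1 + - q * x1 + d * y2 + 0 * x2))
       = (a * x1 + p * x2 - q * y2) ^ 2 + (a * y1 + p * y2 + q * x2) ^ 2
         + (a * d - (p * p + q * q)) * (x2 * x2 + y2 * y2)) by ring.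
    rewrite Eq. assert (0 <= a * d - (p * p + q * q)) by nra.
    pose proof (pow2_ge_0 (a * x1 + p * x2 - q * y2)). pose proof (pow2_ge_0 (a * y1 + p * y2 + q * x2)).
    nra.
Qed.

Lemma pd_vals P : pos_def P ->
  P <> Mat2_zero /\ 0 <= Re (m11 (Fm P)) /\ 0 <= Re (m22 (Fm P)) /\ 0 < Re (Mat2_det (Fm P)).
Proof.
  intros [Hh Hq].
  destruct (herm_comp P Hh) as [E1 [E2 [E3 E4]]].
  assert (N1 : RtoC 1 <> 0%C).
  { intro h. pose proof (f_equal (@fst R R) h) as h0. simpl in h0. lra. }
  pose proof (Hq (RtoC 1) (RtoC 0) (or_introl N1)) as Q1.
  pose proof (Hq (RtoC 0) (RtoC 1) (or_intror N1)) as Q2.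
  rewrite qform_re in Q1, Q2. simpl in Q1, Q2. rewrite E1, E2, E3, E4 in Q1, Q2.
  set (a := Re (m11 P)) in *. set (d := Re (m22 P)) in *.
  set (b1 := Re (m12 P)) in *. set (b2 := Im (m12 P)) in *.
  assert (Ha : 0 < a) by nra. assert (Hd : 0 < d) by nra.
  assert (N2 : RtoC a <> 0%C).
  { intro h. pose proof (f_equal (@fst R R) h) as h0. simpl in h0. lra. }
  pose proof (Hq (- Re (m12 P), - Im (m12 P)) (RtoC a) (or_intror N2)) as Q3.
  rewrite qform_re in Q3. simpl in Q3. rewrite E1, E2, E3, E4 in Q3. fold b1 b2 a d in Q3.
  assert (Hdet : 0 < a * d - (b1 * b1 + b2 * b2)).
  { assert (Eq3 : - b1 * (a * - b1 - 0 * - b2 + b1 * a - b2 * 0) +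
       - b2 * (a * - b2 + 0 * - b1 + b1 * 0 + b2 * a) +
       a * (b1 * - b1 - - b2 * - b2 + d * a - 0 * 0) +
       0 * (b1 * - b2 + - b2 * - b1 + d * 0 + 0 * a) = a * (a * d - (b1 * b1 + b2 * b2))) by ring.
    rewrite Eq3 in Q3. nra. }
  assert (HPnz : P <> Mat2_zero).
  { intro h. unfold a in Ha. rewrite h in Ha. simpl in Ha. lra. }
  pose proof (Nrm_pos P HPnz) as HN.
  assert (Hs : 0 < / Nrm P) by (apply Rinv_0_lt_compat; auto).
  set (s := / Nrm P) in *.
  split; auto.
  rewrite det_re, Fm11_re, Fm11_im, Fm12_re, Fm12_im, Fm21_re, Fm21_im, Fm22_re, Fm22_im.
  unfold ReT, ImT. fold s. rewrite E1, E2, E3, E4. fold a d b1 b2.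
  split. apply Rmult_le_pos; nra.
  split. apply Rmult_le_pos; nra.
  match goal with |- 0 < ?e => replace e with ((s * (a + d)) ^ 2 * (a * d - (b1 * b1 + b2 * b2))) by ring end.
  apply Rmult_lt_0_compat; auto. apply pow_lt. nra.
Qed.

Lemma avoid_list (l : list R) : forall f : nat -> R, (forall i j, f i = f j -> i = j) ->
  exists k, ~ In (f k) l.
Proof.
  induction l as [|a l IH]; intros f Hf.
  - exists 0%nat. simpl. auto.
  - destruct (classic (exists k0, f k0 = a)) as [[k0 Hk0]|Hn].
    + destruct (IH (fun k => f (S (k0 + k)))) as [k Hk].
      { intros i j H. apply Hf in H. lia. }
      exists (S (k0 + k)). simpl. intros [H1|H1].
      * rewrite <- Hk0 in H1. apply Hf in H1. lia.
      * auto.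
    + destruct (IH f Hf) as [k Hk]. exists k. simpl. intros [H1|H1].
      * apply Hn. exists k. auto.
      * auto.
Qed.

Lemma per_nat (E : R -> Mat2 -> Prop) : periodic_fibers E ->
  forall n th A, E (th + 2 * PI * INR n) A <-> E th A.
Proof.
  intros Hp n. induction n as [|n IH]; intros th A.
  - simpl. rewrite Rmult_0_r, Rplus_0_r. tauto.
  - rewrite S_INR. replace (th + 2 * PI * (INR n + 1)) with ((th + 2 * PI * INR n) + 2 * PI) by ring.
    rewrite (Hp (th + 2 * PI * INR n) A). apply IH.
Qed.

Lemma per_Z (E : R -> Mat2 -> Prop) : periodic_fibers E ->
  forall z th A, E (th + 2 * PI * IZR z) A <-> E th A.
Proof.
  intros Hp z th A. destruct z as [|p|p].
  - simpl. rewrite Rmult_0_r, Rplus_0_r. tauto.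
  - replace (IZR (Z.pos p)) with (INR (Pos.to_nat p)) by (rewrite INR_IZR_INZ, positive_nat_Z; reflexivity).
    apply per_nat; auto.
  - rewrite IZR_NEG.
    replace (IZR (Z.pos p)) with (INR (Pos.to_nat p)) by (rewrite INR_IZR_INZ, positive_nat_Z; reflexivity).
    set (n := Pos.to_nat p).
    pose proof (per_nat E Hp n (th + 2 * PI * - INR n) A) as H.
    replace (th + 2 * PI * - INR n + 2 * PI * INR n) with th in H by ring. tauto.
Qed.

Definition red (t : R) : R := t - 2 * PI * IZR (up (t / (2 * PI)) - 1).

Lemma red_range t : 0 <= red t < 2 * PI.
Proof.
  unfold red. pose proof PI_RGT_0. destruct (archimed (t / (2 * PI))) as [H1 H2].
  rewrite minus_IZR. set (u := IZR (up (t / (2 * PI)))) in *.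
  assert (Ht : t = 2 * PI * (t / (2 * PI))) by (field; lra).
  set (x := t / (2 * PI)) in *. split; nra.
Qed.

Lemma IZR_small z : Rabs (IZR z) < 1 -> z = 0%Z.
Proof.
  intros H. apply Rabs_def2 in H. destruct H as [H1 H2].
  apply one_IZR_lt1. lra.
Qed.

Lemma density (E : R -> Mat2 -> Prop) (bad : list R) : periodic_fibers E ->
  (forall th, 0 <= th < 2 * PI -> ~ In th bad -> exists A, E th A /\ pos_def A) ->
  forall th0 d, 0 < d -> exists x, Rabs (x - th0) < d /\ exists A, E x A /\ pos_def A.
Proof.
  intros Hp Hb th0 d Hd. pose proof PI_RGT_0 as HPI. pose proof PI2_1 as HPI3.
  set (d' := Rmin d 1).
  assert (Hd' : 0 < d') by (unfold d'; apply Rmin_pos; lra).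
  assert (Hd1 : d' <= 1) by apply Rmin_r. assert (Hd2 : d' <= d) by apply Rmin_l.
  set (pt := fun k : nat => th0 + d' / (INR k + 2)).
  assert (Hpt : forall k, 0 < pt k - th0 < d').
  { intros k. unfold pt. pose proof (pos_INR k). split.
    - replace (th0 + d' / (INR k + 2) - th0) with (d' / (INR k + 2)) by ring.
      apply Rdiv_lt_0_compat; lra.
    - replace (th0 + d' / (INR k + 2) - th0) with (d' / (INR k + 2)) by ring.
      apply (Rmult_lt_reg_r (INR k + 2)). lra. unfold Rdiv. rewrite Rmult_assoc, Rinv_l by lra. nra. }
  destruct (avoid_list bad (fun k => red (pt k))) as [k Hk].
  { intros i j H. unfold red in H.
    set (zi := (up (pt i / (2 * PI)) - 1)%Z) in H. set (zj := (up (pt j / (2 * PI)) - 1)%Z) in H.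
    assert (Hz : zi = zj).
    { assert (Hz0 : (zi - zj)%Z = 0%Z).
      { apply IZR_small. rewrite minus_IZR.
        assert (E1 : IZR zi - IZR zj = (pt i - pt j) / (2 * PI)) .
        { assert (Hd3 : pt i - pt j = 2 * PI * (IZR zi - IZR zj)) by lra. rewrite Hd3. field. lra. }
        rewrite E1. pose proof (Hpt i). pose proof (Hpt j).
        rewrite Rabs_lt_between. split.
        - apply (Rmult_lt_reg_r (2 * PI)). lra. unfold Rdiv. rewrite Rmult_assoc, Rinv_l by lra. lra.
        - apply (Rmult_lt_reg_r (2 * PI)). lra. unfold Rdiv. rewrite Rmult_assoc, Rinv_l by lra. lra. }
      lia. }
    rewrite Hz in H. assert (Hp2 : pt i = pt j) by lra. unfold pt in Hp2.
    pose proof (pos_INR i). pose proof (pos_INR j).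
    assert (INR i + 2 = INR j + 2).
    { apply (Rmult_eq_reg_l d'); [|lra].
      assert (Hq : d' / (INR i + 2) = d' / (INR j + 2)) by lra.
      apply (Rmult_eq_reg_r (/ (INR i + 2) * / (INR j + 2))).
      replace (d' * (INR i + 2) * (/ (INR i + 2) * / (INR j + 2))) with (d' / (INR j + 2)) by (field; lra).
      replace (d' * (INR j + 2) * (/ (INR i + 2) * / (INR j + 2))) with (d' / (INR i + 2)) by (field; lra).
      lra. apply Rmult_integral_contrapositive; split; apply Rinv_neq_0_compat; lra. }
    apply INR_eq. lra. }
  destruct (Hb (red (pt k)) (red_range _) Hk) as [A [HA HpA]].
  exists (pt k). split.
  - pose proof (Hpt k). rewrite Rabs_pos_eq; lra.
  - exists A. split; auto.
    unfold red in HA. apply (per_Z E Hp (up (pt k / (2 * PI)) - 1)) in HA.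
    replace (pt k - 2 * PI * IZR (up (pt k / (2 * PI)) - 1) + 2 * PI * IZR (up (pt k / (2 * PI)) - 1))
      with (pt k) in HA by ring. exact HA.
Qed.

Lemma scale_zero A : Mat2_scale 0%C A = Mat2_zero.
Proof. unfold Mat2_scale, Mat2_zero. f_equal; ring. Qed.

Theorem mainTheorem10 (E : R -> Mat2 -> Prop) :
  analytic_line_subbundle E ->
  (forall (theta : R) (A : Mat2), E theta A -> E theta (Mat2_adj A)) ->
  (exists bad : list R, forall theta : R, 0 <= theta < 2 * PI -> ~ In theta bad ->
     exists A : Mat2, E theta A /\ pos_def A) ->
  exists X : R -> Mat2,
    analytic_section E X /\
    (forall theta : R, pos_semidef (X theta)) /\
    (exists theta : R, Mat2_det (X theta) <> 0%C).
Proof.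
  intros [Hper Hloc] Hadj [bad Hbad].
  assert (Hfr : forall th, exists B, B <> Mat2_zero /\ forall A, E th A <-> exists c, A = Mat2_scale c B).
  { intros th. destruct (Hloc th) as [r [Hr [s Hs]]].
    destruct (Hs th) as [_ [Hnz Hiff]]. rewrite Rminus_diag, Rabs_R0; auto.
    exists (s th). auto. }
  assert (Hprop : forall th A B, E th A -> E th B -> A <> Mat2_zero -> exists c, B = Mat2_scale c A).
  { intros th A B HA HB Hnz. destruct (Hfr th) as [S0 [HS0 Hi]].
    destruct (proj1 (Hi A) HA) as [ca Hca]. destruct (proj1 (Hi B) HB) as [cb Hcb].
    assert (Hca0 : ca <> 0%C). { intro h. apply Hnz. rewrite Hca, h. apply scale_zero. }
    exists (cb / ca)%C. rewrite Hca, Hcb, scale_scale. f_equal. field. auto. }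
  assert (Hsc : forall th A c, E th A -> E th (Mat2_scale c A)).
  { intros th A c HA. destruct (Hfr th) as [S0 [HS0 Hi]].
    destruct (proj1 (Hi A) HA) as [ca Hca]. apply Hi. exists (c * ca)%C.
    rewrite Hca, scale_scale. reflexivity. }
  assert (Hex : forall th, exists A, E th A /\ A <> Mat2_zero).
  { intros th. destruct (Hfr th) as [S0 [HS0 Hi]]. exists S0. split; auto.
    apply Hi. exists 1%C. rewrite scale_one. reflexivity. }
  pose (S := fun th => proj1_sig (constructive_indefinite_description _ (Hex th))).
  assert (HS : forall th, E th (S th) /\ S th <> Mat2_zero).
  { intros th. unfold S. apply proj2_sig. }
  pose (X := fun th => Fm (S th)).
  assert (HX : forall th B, E th B -> B <> Mat2_zero -> X th = Fm B).
  { intros th B HB Hnz. destruct (HS th) as [HS1 HS2].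
    destruct (Hprop th (S th) B HS1 HB HS2) as [c Hc].
    assert (Hc0 : c <> 0%C). { intro h. apply Hnz. rewrite Hc, h. apply scale_zero. }
    rewrite Hc, Fm_scale; auto. }
  assert (Han : forall th0, mat_analytic_at X th0).
  { intros th0. destruct (Hloc th0) as [r [Hr [s Hs]]].
    destruct (Hs th0) as [[H1 [H2 [H3 [H4 [H5 [H6 [H7 H8]]]]]]] [Hnz _]].
    { rewrite Rminus_diag, Rabs_R0; auto. }
    assert (HXs : forall x, Rabs (x - th0) < r -> X x = Fm (s x)).
    { intros x Hx. destruct (Hs x Hx) as [_ [Hn Hi]]. apply HX; auto.
      apply Hi. exists 1%C. rewrite scale_one. reflexivity. }
    assert (HN : analytic_at (fun t => Nrm (s t)) th0).
    { eapply an_ext.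
      2:{ intros t. unfold Nrm. simpl. reflexivity. }
      repeat apply an_plus; apply an_mult; auto; apply an_mult; auto;
      (apply (an_ext (fun _ => 1) _ th0); [|intros; reflexivity];
       exists 1; split; [lra|]; exists (fun n => match n with O => 1 | _ => 0 end);
       intros x Hx; apply is_pseries_R, is_series_decr_1;
       apply (is_series_ext (fun _ : nat => 0)); [intros; simpl; ring|];
       match goal with |- is_series _ ?l => replace l with 0 by (simpl; unfold plus, opp; simpl; ring) end;
       pose proof (is_series_scal_r 0 _ _ (is_series_geom (1/2) ltac:(rewrite Rabs_pos_eq; lra))) as Z;
       rewrite Rmult_0_r in Z; apply (is_series_ext _ _ _ (fun n => Rmult_0_r _)) in Z; exact Z). }
    assert (HNi : analytic_at (fun t => / Nrm (s t)) th0).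
    { apply an_inv; auto. pose proof (Nrm_pos _ Hnz). lra. }
    assert (HRT : analytic_at (fun t => ReT (s t)) th0) by exact (an_plus _ _ _ H1 H7).
    assert (HIT : analytic_at (fun t => ImT (s t)) th0) by exact (an_plus _ _ _ H2 H8).
    assert (Kp : forall u v, analytic_at u th0 -> analytic_at v th0 ->
      analytic_at (fun t => / Nrm (s t) * (ReT (s t) * u t + ImT (s t) * v t)) th0).
    { intros u v Hu Hv. exact (an_mult _ _ _ HNi (an_plus _ _ _ (an_mult _ _ _ HRT Hu) (an_mult _ _ _ HIT Hv))). }
    assert (Km : forall u v, analytic_at u th0 -> analytic_at v th0 ->
      analytic_at (fun t => / Nrm (s t) * (ReT (s t) * u t - ImT (s t) * v t)) th0).
    { intros u v Hu Hv. exact (an_mult _ _ _ HNi (an_minus _ _ _ (an_mult _ _ _ HRT Hu) (an_mult _ _ _ HIT Hv))). }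
    unfold mat_analytic_at.
    repeat split.
    - eapply an_ext_loc. apply (Kp _ _ H1 H2). exists r; split; auto; intros x Hx.
      rewrite (HXs x Hx), Fm11_re. reflexivity.
    - eapply an_ext_loc. apply (Km _ _ H2 H1). exists r; split; auto; intros x Hx.
      rewrite (HXs x Hx), Fm11_im. reflexivity.
    - eapply an_ext_loc. apply (Kp _ _ H3 H4). exists r; split; auto; intros x Hx.
      rewrite (HXs x Hx), Fm12_re. reflexivity.
    - eapply an_ext_loc. apply (Km _ _ H4 H3). exists r; split; auto; intros x Hx.
      rewrite (HXs x Hx), Fm12_im. reflexivity.
    - eapply an_ext_loc. apply (Kp _ _ H5 H6). exists r; split; auto; intros x Hx.
      rewrite (HXs x Hx), Fm21_re. reflexivity.
    - eapply an_ext_loc. apply (Km _ _ H6 H5). exists r; split; auto; intros x Hx.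
      rewrite (HXs x Hx), Fm21_im. reflexivity.
    - eapply an_ext_loc. apply (Kp _ _ H7 H8). exists r; split; auto; intros x Hx.
      rewrite (HXs x Hx), Fm22_re. reflexivity.
    - eapply an_ext_loc. apply (Km _ _ H8 H7). exists r; split; auto; intros x Hx.
      rewrite (HXs x Hx), Fm22_im. reflexivity. }
  assert (Hdet_an : forall th, analytic_at (fun t => Re (Mat2_det (X t))) th).
  { intros th. destruct (Han th) as [H1 [H2 [H3 [H4 [H5 [H6 [H7 H8]]]]]]].
    eapply an_ext. 2:{ intros t. rewrite det_re. reflexivity. }
    apply an_minus. apply an_minus; apply an_mult; auto.
    apply an_minus; apply an_mult; auto. }
  assert (Hgood : forall th0 d, 0 < d -> exists x, Rabs (x - th0) < d /\
     0 <= Re (m11 (X x)) /\ 0 <= Re (m22 (X x)) /\ 0 < Re (Mat2_det (X x))).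
  { intros th0 d Hd. destruct (density E bad Hper Hbad th0 d Hd) as [x [Hx [P [HP HPd]]]].
    destruct (pd_vals P HPd) as [Hnz [V1 [V2 V3]]].
    exists x. rewrite (HX x P HP Hnz). auto. }
  exists X. split; [split; [|split]|split].
  - intros th. destruct (HS (th + 2 * PI)) as [HS1 HS2].
    rewrite (HX th (S (th + 2 * PI))); auto. apply Hper; auto.
  - exact Han.
  - intros th. unfold X, Fm. apply Hsc. apply HS.
  - intros th. destruct (HS th) as [HS1 HS2]. apply psd_crit.
    + destruct (Hprop th (S th) (Mat2_adj (S th)) HS1 (Hadj _ _ HS1) HS2) as [c Hc].
      exact (Fm_herm c _ Hc).
    + destruct (Han th) as [G1 [G2 [G3 [G4 [G5 [G6 [G7 G8]]]]]]].
      apply (an_nonneg (fun t => Re (m11 (X t))) th G1). intros d Hd.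
      destruct (Hgood th d Hd) as [x [Hx [V1 [V2 V3]]]]. exists x; auto.
    + destruct (Han th) as [G1 [G2 [G3 [G4 [G5 [G6 [G7 G8]]]]]]].
      apply (an_nonneg (fun t => Re (m22 (X t))) th G7). intros d Hd.
      destruct (Hgood th d Hd) as [x [Hx [V1 [V2 V3]]]]. exists x; auto.
    + apply (an_nonneg (fun t => Re (Mat2_det (X t))) th (Hdet_an th)). intros d Hd.
      destruct (Hgood th d Hd) as [x [Hx [V1 [V2 V3]]]]. exists x; split; auto; lra.
  - destruct (Hgood 0 1 ltac:(lra)) as [x [_ [_ [_ V3]]]]. exists x. intro h.
    rewrite h in V3. simpl in V3. lra.
Qed.
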